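(* For every integer $n\ge 1$, $$m^*(n,3,2)=\min\Big\{m : \binom{m}{2}-K(m,2,3,1)\ge n\Big\}=\lceil 2\sqrt{n}\rceil.$$
   Context: For positive integers $s,u,v,e$, $K(s,u,v,e)$ is the smallest number of binary vectors of length $s$ and weight $u$ such that every binary vector of length $s$ and weight $v$ is at Hamming distance at most $e$ from at least one of them. For a binary matrix $M$ and a nonempty set $S$ of its columns, $S$ is a stopping set if the submatrix formed by $S$ has no row with exactly one $1$; $s(M)$ is the minimum size of a stopping set ($+\infty$ if none). $M$ is $(d,k)$-decodable if $s(M)\ge d+1$ and every column has exactly $k$ ones; $m^*(n,d,k)$ is the minimum $m$ such that an $m\times n$ $(d,k)$-decodable binary matrix exists. *)

(* Defs.v *)
From HB Require Import structures.
From mathcomp Require Import all_boot all_order all_algebra.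
From mathcomp Require Import Rstruct.
Set Implicit Arguments. Unset Strict Implicit. Unset Printing Implicit Defensive.
Import Order.TTheory GRing.Theory Num.Theory.

(* Binary vectors of length s are identified with their supports, subsets of 'I_s;
   weight = cardinality, Hamming distance = size of the symmetric difference. *)
Definition weight (s : nat) (x : {set 'I_s}) : nat := #|x|.
Definition hamming (s : nat) (x y : {set 'I_s}) : nat := #|(x :\: y) :|: (y :\: x)|.

Definition is_covering (s u v e : nat) (F : {set {set 'I_s}}) : bool :=
  [forall x in F, weight x == u] &&
  [forall y : {set 'I_s}, (weight y == v) ==> [exists x in F, hamming x y <= e]].

(* K(s,u,v,e): minimum size of a covering (the default value #|{set {set 'I_s}}| is
   only used when no covering exists, which does not happen for (u,v,e)=(2,3,1)). *)
Definition K (s u v e : nat) : nat :=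
  \big[minn/#|{set {set 'I_s}}|]_(F : {set {set 'I_s}} | is_covering u v e F) #|F|.

Definition stopping_set (m n : nat) (M : 'M[bool]_(m, n)) (S : {set 'I_n}) : bool :=
  (S != set0) && [forall i : 'I_m, #|[set j in S | M i j]| != 1].

(* s(M) >= d+1, i.e. every stopping set has size at least d+1 (vacuous if none). *)
Definition stopping_distance_ge (m n : nat) (M : 'M[bool]_(m, n)) (t : nat) : bool :=
  [forall S : {set 'I_n}, stopping_set M S ==> (t <= #|S|)].

Definition decodable (d k m n : nat) (M : 'M[bool]_(m, n)) : bool :=
  stopping_distance_ge M d.+1 && [forall j : 'I_n, #|[set i | M i j]| == k].

Definition is_least (P : nat -> Prop) (m : nat) : Prop :=
  P m /\ forall m', P m' -> m <= m'.

Definition is_mstar (n d k m : nat) : Prop :=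
  is_least (fun m' => exists M : 'M[bool]_(m', n), decodable d k M) m.

(* Main.v *)
Require Import Defs.
From HB Require Import structures.
From mathcomp Require Import all_boot all_order all_algebra.
From mathcomp Require Import Rstruct.
From mathcomp Require Import zify.
Set Implicit Arguments. Unset Strict Implicit. Unset Printing Implicit Defensive.
Import Order.TTheory GRing.Theory Num.Theory.


Lemma sqrn_sub_ge0 (d e : nat) : True. Proof. by []. Qed.
Definition tfree (T : finType) (E : {set {set T}}) :=
  forall a b c : T, [set a; b] \in E -> [set b; c] \in E -> [set a; c] \in E -> False.

Lemma card_bigcup_le (T I : finType) (A : {pred I}) (F : I -> {set T}) :
  #|\bigcup_(i in A) F i| <= \sum_(i in A) #|F i|.
Proof.
apply: (big_ind2 (fun (X : {set T}) n => #|X| <= n)) => //.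
- by rewrite cards0.
- move=> X1 n1 X2 n2 H1 H2; apply: leq_trans (leq_card_setU _ _) _.
  exact: leq_add.
Qed.

Lemma mantel (T : finType) (E : {set {set T}}) :
  (forall f, f \in E -> #|f| = 2) -> tfree E -> #|E| <= #|T| * #|T| %/ 4.
Proof.
move=> E2 tf.
pose N v := [set y | [set v; y] \in E].
have [->|[f fE]] := set_0Vmem E; first by rewrite cards0.
have /cards2P [a [b [ab fab]]] : #|f| == 2 by rewrite E2.
case: (@arg_maxnP _ a predT (fun v => #|N v|)) => // x _ Hmax.
have sub : E \subset \bigcup_(v in ~: N x) [set [set v; y] | y in N v].
  apply/subsetP => g gE.
  have /cards2P [p [q [pq gpq]]] : #|g| == 2 by rewrite E2.
  subst g.
  case: (boolP (p \in N x)) => px.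
  - have qx : q \in ~: N x.
      rewrite inE; apply/negP => qx.
      by move: px qx; rewrite !inE => px qx; exact: (tf x p q px gE qx).
    apply/bigcupP; exists q => //; apply/imsetP; exists p; first by rewrite inE setUC.
    by rewrite setUC.
  - apply/bigcupP; exists p; first by rewrite inE.
    by apply/imsetP; exists q; rewrite ?inE.
apply: leq_trans (subset_leq_card sub) _.
apply: leq_trans (card_bigcup_le _ _) _.
apply: (@leq_trans (\sum_(v in ~: N x) #|N x|)).
  apply: leq_sum => v _; apply: leq_trans (leq_imset_card _ _) _; exact: Hmax.
rewrite sum_nat_const.
have := cardsC (N x); move: #|N x| #|~: N x| => d e He.
rewrite -He leq_divRL //; clear.
case: (leqP d e) => h.
  rewrite -(subnKC h); move: (e - d) => k; rewrite !mulnDl !mulnDr; nia.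
rewrite -(subnKC (ltnW h)); move: (d - e) => k; rewrite !mulnDl !mulnDr; nia.
Qed.


Definition Lset m := [set i : 'I_m | i < m %/ 2].
Definition Bip m := [set [set p.1; p.2] | p in setX (Lset m) (~: Lset m)].

Lemma in_set2_eq (T : finType) (a b c : T) : c \in [set a; b] -> c = a \/ c = b.
Proof. by move/set2P. Qed.

Lemma Bip_mem m (x y : 'I_m) : [set x; y] \in Bip m -> (x < m%/2) != (y < m%/2).
Proof.
case/imsetP => [[a b]] /setXP [] /=; rewrite !inE => aL bR E.
have xin : x \in [set a; b] by rewrite -E set21.
have yin : y \in [set a; b] by rewrite -E set22.
have bin : b \in [set x; y] by rewrite E set22.
have ain : a \in [set x; y] by rewrite E set21.
move: ain bin; case/in_set2_eq: xin => ->; case/in_set2_eq: yin => ->;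
  rewrite ?aL ?(negbTE bR) // => /in_set2_eq [] ea /in_set2_eq [] eb;
  by move: aL bR; rewrite ?ea ?eb => -> .
Qed.

Lemma Bip_tfree m : tfree (Bip m).
Proof.
move=> a b c /Bip_mem h1 /Bip_mem h2 /Bip_mem h3.
by move: h1 h2 h3; case: (a < m%/2); case: (b < m%/2); case: (c < m%/2).
Qed.

Lemma Bip_2 m f : f \in Bip m -> #|f| = 2.
Proof.
case/imsetP => [[a b]] /setXP [] /=; rewrite !inE => aL bR ->.
have ab : a != b by apply/eqP => ab; move: aL; rewrite ab => aL; rewrite aL in bR.
by rewrite cards2 ab.
Qed.

Lemma card_Lset m : #|Lset m| = m %/ 2.
Proof.
have H : m %/ 2 <= m by apply: leq_div.
have -> : Lset m = [set widen_ord H j | j in setT].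
  apply/setP=> i; rewrite !inE; apply/idP/imsetP => [ik|[j _ ->]].
    by exists (Ordinal ik) => //; apply/val_inj.
  by rewrite /= ltn_ord.
rewrite card_imset ?cardsT ?card_ord //; move=> i j /(congr1 val) /= ij; exact: val_inj.
Qed.

Lemma Bip_card m : m * m %/ 4 <= #|Bip m|.
Proof.
rewrite card_in_imset; last first.
  move=> [a b] [a' b']; rewrite !inE /= => /andP [aL bR] /andP [aL' bR'] E.
  have ain : a \in [set a'; b'] by rewrite -E set21.
  have bin : b \in [set a'; b'] by rewrite -E set22.
  case/in_set2_eq: ain => ea; last by move: aL; rewrite ea => aL; rewrite aL in bR'.
  case/in_set2_eq: bin => eb; first by move: aL'; rewrite -eb => aL'; rewrite aL' in bR.
  by rewrite ea eb.
rewrite cardsX card_Lset.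
have := cardsC (Lset m); rewrite card_Lset card_ord => HC.
have -> : #|~: Lset m| = m - m %/ 2 by lia.
rewrite -ltnS ltn_divLR //.
have := divn_eq m 2; have := ltn_pmod m (isT : 0 < 2).
move: (m %/ 2) (m %% 2) => k r hr ->.
nia.
Qed.


Lemma bigmin_le (I : finType) (P : pred I) (F : I -> nat) d x :
  P x -> \big[minn/d]_(i | P i) F i <= F x.
Proof.
move=> Px; have : x \in index_enum I := mem_index_enum x.
elim: (index_enum I) => // y s IH; rewrite inE big_cons; case/orP => [/eqP <-|xs].
  by rewrite Px geq_minl.
case: (P y); last exact: IH.
exact: leq_trans (geq_minr _ _) (IH xs).
Qed.

Lemma bigmin_ge (I : finType) (P : pred I) (F : I -> nat) d lb :
  lb <= d -> (forall i, P i -> lb <= F i) -> lb <= \big[minn/d]_(i | P i) F i.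
Proof.
move=> hd hF; apply: (big_ind (fun x => lb <= x)) => // x y hx hy.
by rewrite leq_min hx hy.
Qed.

Definition Dm m := [set f : {set 'I_m} | #|f| == 2].

Lemma card_Dm m : #|Dm m| = 'C(m, 2).
Proof. by rewrite /Dm card_draws card_ord. Qed.

Lemma ham_ge (s : nat) (x y : {set 'I_s}) :
  #|x :\: y| <= hamming x y /\ #|y :\: x| <= hamming x y.
Proof.
by split; apply: subset_leq_card; [apply: subsetUl | apply: subsetUr].
Qed.

Lemma ham_sub (s : nat) (x y : {set 'I_s}) :
  #|x| = 2 -> #|y| = 3 -> hamming x y <= 1 -> x \subset y.
Proof.
move=> hx hy hh; have [h1 h2] := ham_ge x y.
have := cardsID y x; have := cardsID x y; rewrite setIC hx hy => e1 e2.
rewrite -setD_eq0 -cards_eq0; lia.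
Qed.

Lemma ham_sub2 (s : nat) (x y : {set 'I_s}) :
  x \subset y -> #|x| = 2 -> #|y| = 3 -> hamming x y <= 1.
Proof.
move=> sxy hx hy; rewrite /hamming.
have -> : x :\: y = set0 by apply/eqP; rewrite setD_eq0.
rewrite set0U cardsD (setIidPr sxy); lia.
Qed.

Lemma cards2_neq (T : finType) (a b : T) : #|[set a; b]| == 2 -> a != b.
Proof. by rewrite cards2; case: (a != b). Qed.

Lemma cov_lb m (F : {set {set 'I_m}}) :
  is_covering 2 3 1 F -> 'C(m, 2) - m * m %/ 4 <= #|F|.
Proof.
case/andP => /forall_inP Fw /forallP Fc.
have FD : F \subset Dm m by apply/subsetP => x /Fw; rewrite inE.
pose G := Dm m :\: F.
have G2 : forall f, f \in G -> #|f| = 2 by move=> f; rewrite !inE => /andP [_ /eqP].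
have tG : tfree G.
  move=> a b c; rewrite !inE => /andP [nab /cards2_neq ab] /andP [nbc /cards2_neq bc]
    /andP [nac /cards2_neq ac].
  pose y := [set a; b; c].
  have y3 : #|y| = 3.
    rewrite /y -setUA cardsU1 cards2 bc !inE negb_or ab ac; by [].
  have /existsP [x /andP [xF hxy]] := implyP (Fc y) (introT eqP y3).
  have x2 : #|x| = 2 by apply/eqP; exact: Fw.
  have sxy := ham_sub x2 y3 hxy.
  have mem : forall z, z \in x -> [|| z == a, z == b | z == c].
    move=> z zx; move: (subsetP sxy z zx); rewrite !inE -orbA; exact.
  have eq2 : forall p q, p != q -> x \subset [set p; q] -> x = [set p; q].
    move=> p q pq sx; apply/eqP; rewrite eqEcard sx cards2 pq x2 //.
  case: (boolP (a \in x)) => ax.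
    case: (boolP (b \in x)) => bx.
      case: (boolP (c \in x)) => cx.
        have : y \subset x.
          by apply/subsetP => z; rewrite !inE -orbA => /or3P [] /eqP ->.
        by move/subset_leq_card; rewrite x2 y3.
      have ex : x = [set a; b].
        apply: eq2 => //; apply/subsetP => z zx; rewrite !inE.
        by case/or3P: (mem z zx) => /eqP ez; rewrite ?ez ?eqxx ?orbT //; rewrite -ez zx in cx.
      by rewrite -ex xF in nab.
    have ex : x = [set a; c].
      apply: eq2 => //; apply/subsetP => z zx; rewrite !inE.
      by case/or3P: (mem z zx) => /eqP ez; rewrite ?ez ?eqxx ?orbT //; rewrite -ez zx in bx.
    by rewrite -ex xF in nac.
  have ex : x = [set b; c].
    apply: eq2 => //; apply/subsetP => z zx; rewrite !inE.
    by case/or3P: (mem z zx) => /eqP ez; rewrite ?ez ?eqxx ?orbT //; rewrite -ez zx in ax.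
  by rewrite -ex xF in nbc.
have := mantel G2 tG; rewrite card_ord.
rewrite /G cardsD (setIidPr FD) card_Dm; lia.
Qed.

Lemma Bip_D m : Bip m \subset Dm m.
Proof. by apply/subsetP => f /Bip_2 h; rewrite inE h. Qed.

Lemma cov_ub m : is_covering 2 3 1 (Dm m :\: Bip m).
Proof.
apply/andP; split.
  by apply/forall_inP => x; rewrite !inE /weight => /andP [_ ->].
apply/forallP => y; apply/implyP => /eqP y3; rewrite /weight in y3.
have : 2 < #|y| by rewrite y3.
case/card_gt2P => a [b [c [[ay byy cy] [ab bc ca]]]].
set k := m %/ 2.
have [p [q [pq [py qy e]]]] : exists p q : 'I_m,
    p != q /\ [/\ p \in y, q \in y & (p < k) == (q < k)].
  have [e1|e1] := boolP ((a < k) == (b < k)); first by exists a, b.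
  have [e2|e2] := boolP ((b < k) == (c < k)); first by exists b, c.
  exists c, a; split => //; split => //.
  by move: e1 e2; case: (a < k); case: (b < k); case: (c < k).
apply/existsP; exists [set p; q]; apply/andP; split.
  rewrite !inE cards2 pq andbT; apply/negP => /Bip_mem.
  by rewrite -/k e.
apply: ham_sub2 => //; last by rewrite cards2 pq.
by apply/subsetP => z; rewrite !inE => /orP [] /eqP ->.
Qed.

Lemma K_eq m : 'C(m, 2) - K m 2 3 1 = m * m %/ 4.
Proof.
have hB : m * m %/ 4 <= 'C(m, 2).
  by rewrite -card_Dm; apply: leq_trans (Bip_card m) (subset_leq_card (Bip_D m)).
have ub : K m 2 3 1 <= 'C(m, 2) - m * m %/ 4.
  rewrite /K; apply: leq_trans; first exact: (bigmin_le _ _ (cov_ub m)).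
  rewrite cardsD (setIidPr (Bip_D m)) card_Dm.
  exact/leq_sub2l/Bip_card.
have lb : 'C(m, 2) - m * m %/ 4 <= K m 2 3 1.
  apply: bigmin_ge; last by move=> F; apply: cov_lb.
  apply: leq_trans (leq_subr _ _) _.
  rewrite -card_Dm; apply: leq_trans (max_card _) _.
  have : #|[set [set x] | x in [set: {set 'I_m}]]| = #|{set 'I_m}|.
    by rewrite card_imset ?cardsT //; apply: set1_inj.
  move=> <-; exact: max_card.
lia.
Qed.


Lemma not1 (I : finType) (A : {set I}) x :
  x \in A -> #|A| != 1 -> exists2 y, y \in A & y != x.
Proof.
move=> xA h; case: (boolP (A \subset [set x])) => [sA|/subsetPn [y yA yx]].
  have eA : A = [set x] by apply/eqP; rewrite eqEsubset sA sub1set xA.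
  by rewrite eA cards1 in h.
by exists y; rewrite // -in_set1.
Qed.

Lemma mk_stop m n (M : 'M[bool]_(m, n)) (S : {set 'I_n}) :
  S != set0 ->
  (forall i j, j \in S -> M i j -> exists2 j', j' \in S & (j' != j) && M i j') ->
  stopping_set M S.
Proof.
move=> S0 H; rewrite /stopping_set S0 /=; apply/forallP => i; apply/negP.
move=> /cards1P [x Ex].
have : x \in [set j in S | M i j] by rewrite Ex set11.
rewrite inE => /andP [xS Mix].
have [j' j'S /andP [nx Mij']] := H i x xS Mix.
have : j' \in [set j in S | M i j] by rewrite inE j'S.
by rewrite Ex inE (negbTE nx).
Qed.

Lemma two_mem (T : finType) (X : {set T}) a :
  #|X| = 2 -> a \in X -> exists c, c != a /\ X = [set a; c].
Proof.
move=> /eqP /cards2P [p [q [pq ->]]] /set2P [] ->.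
  by exists q; split => //; rewrite eq_sym.
by exists p; split; rewrite // setUC.
Qed.

Lemma cards3 (T : finType) (a b c : T) :
  a != b -> b != c -> a != c -> #|[set a; b; c]| = 3.
Proof.
move=> ab bc ac; rewrite -setUA cardsU1 cards2 bc !inE negb_or ab ac; by [].
Qed.

Section Mx.
Variables m n : nat.
Variable M : 'M[bool]_(m, n).
Let c j := [set i | M i j].
Let cE i j : (i \in c j) = M i j. Proof. by rewrite inE. Qed.

Lemma stop_good :
  (forall j, #|c j| = 2) -> injective c -> tfree [set c j | j in [set: 'I_n]] ->
  stopping_distance_ge M 4.
Proof.
move=> c2 cinj tf; apply/forallP => S; apply/implyP => stS.
move: (stS); rewrite /stopping_set => /andP [/set0Pn [e eS] /forallP rows].
rewrite leqNgt; apply/negP => lt4.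
have E j : c j \in [set c j | j in [set: 'I_n]] by apply: imset_f; rewrite inE.
have /cards2P [a [b [ab ce]]] : #|c e| == 2 by rewrite c2.
have [f fS /andP [fe af]] : exists2 f, f \in S & (f != e) && M a f.
  have ea : e \in [set j in S | M a j] by rewrite inE eS -cE ce set21.
  have [f] := not1 ea (rows a); rewrite inE => /andP [fS Maf] fe.
  by exists f; rewrite ?fe.
have [c' [c'a cf]] := two_mem (c2 f) (etrans (cE a f) af).
have c'b : c' != b.
  apply/eqP => c'b; move: fe; rewrite -(inj_eq cinj) ce cf c'b; by rewrite eqxx.
have [g gS /andP [ge bg]] : exists2 g, g \in S & (g != e) && M b g.
  have eb : e \in [set j in S | M b j] by rewrite inE eS -cE ce set22.
  have [g] := not1 eb (rows b); rewrite inE => /andP [gS Mbg] ge.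
  by exists g; rewrite ?ge.
have [d [db cg]] := two_mem (c2 g) (etrans (cE b g) bg).
have gf : g != f.
  apply/eqP => gf; have : b \in c f by rewrite -gf cg set21.
  by rewrite cf => /set2P [] eb; [move: ab; rewrite eb eqxx | move: c'b; rewrite eb eqxx].
have S3 : S = [set e; f; g].
  apply/eqP; rewrite eq_sym eqEcard; apply/andP; split.
    by apply/subsetP => z; rewrite !inE -orbA => /or3P [] /eqP ->.
  by rewrite cards3 // eq_sym.
have [h hS /andP [hf c'h]] : exists2 h, h \in S & (h != f) && M c' h.
  have fc : f \in [set j in S | M c' j] by rewrite inE fS -cE cf set22.
  have [h] := not1 fc (rows c'); rewrite inE => /andP [hS Mh] hf.
  by exists h; rewrite ?hf.
move: hS hf c'h; rewrite S3 !inE -orbA => /or3P [] /eqP -> //; rewrite ?eqxx //.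
- by move=> _; rewrite -cE ce => /set2P [] ec; [move: c'a | move: c'b]; rewrite ec eqxx.
- move=> _; rewrite -cE cg => /set2P [] ec; first by move: c'b; rewrite ec eqxx.
  by apply: (tf a b c'); [rewrite -ce | rewrite ec -cg | rewrite -cf]; exact: E.
Qed.

Lemma stop_bad :
  stopping_distance_ge M 4 -> (forall j, #|c j| = 2) ->
  injective c /\ tfree [set c j | j in [set: 'I_n]].
Proof.
move=> /forallP H c2; split.
  move=> j1 j2 e; apply/eqP; apply/negPn/negP => j12.
  suff : 4 <= #|[set j1; j2]| by rewrite cards2 j12.
  apply: (implyP (H _)).
  apply: mk_stop; first by apply/set0Pn; exists j1; rewrite set21.
  move=> i j /set2P [] -> Mi.
    by exists j2; rewrite ?set22 // eq_sym j12 -cE -e cE.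
  by exists j1; rewrite ?set21 // j12 -cE e cE.
move=> a b d /imsetP [j1 _ e1] /imsetP [j2 _ e2] /imsetP [j3 _ e3].
have ab : a != b by apply/eqP => ab; have := c2 j1; rewrite -e1 ab setUid cards1.
have bd : b != d by apply/eqP => bd; have := c2 j2; rewrite -e2 bd setUid cards1.
have ad : a != d by apply/eqP => ad; have := c2 j3; rewrite -e3 ad setUid cards1.
have nin x y z (j : 'I_n) : c j = [set x; y] -> z != x -> z != y -> ~~ M z j.
  by move=> ej zx zy; rewrite -cE ej !inE negb_or zx zy.
have Ma1 : M a j1 by rewrite -cE -e1 set21.
have Mb1 : M b j1 by rewrite -cE -e1 set22.
have Mb2 : M b j2 by rewrite -cE -e2 set21.
have Md2 : M d j2 by rewrite -cE -e2 set22.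
have Ma3 : M a j3 by rewrite -cE -e3 set21.
have Md3 : M d j3 by rewrite -cE -e3 set22.
have da : d != a by rewrite eq_sym.
have db : d != b by rewrite eq_sym.
have ba : b != a by rewrite eq_sym.
have j12 : j1 != j2.
  by apply/eqP => ej; move: (nin a b d j1 (esym e1) da db); rewrite ej Md2.
have j23 : j2 != j3.
  by apply/eqP => ej; move: (nin a d b j3 (esym e3) ba bd); rewrite -ej Mb2.
have j13 : j1 != j3.
  by apply/eqP => ej; move: (nin a d b j3 (esym e3) ba bd); rewrite -ej Mb1.
have j21 : j2 != j1 by rewrite eq_sym.
have j32 : j3 != j2 by rewrite eq_sym.
have j31 : j3 != j1 by rewrite eq_sym.
suff : 4 <= #|[set j1; j2; j3]| by rewrite cards3.
apply: (implyP (H _)); apply: mk_stop; first by apply/set0Pn; exists j1; rewrite !inE eqxx.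
move=> i j; rewrite !inE -orbA => /or3P [] /eqP -> Mi.
- have : i \in [set a; b] by rewrite e1 cE.
  by case/set2P => ->; [exists j3 | exists j2]; rewrite ?inE ?eqxx ?orbT ?j31 ?j21 ?Ma3 ?Mb2.
- have : i \in [set b; d] by rewrite e2 cE.
  by case/set2P => ->; [exists j1 | exists j3]; rewrite ?inE ?eqxx ?orbT ?j12 ?j32 ?Mb1 ?Md3.
- have : i \in [set a; d] by rewrite e3 cE.
  by case/set2P => ->; [exists j1 | exists j2]; rewrite ?inE ?eqxx ?orbT ?j13 ?j23 ?Ma1 ?Md2.
Qed.

End Mx.


Lemma dec_le m n (M : 'M[bool]_(m, n)) : decodable 3 2 M -> n <= m * m %/ 4.
Proof.
case/andP => sd /forallP c2.
have c2' : forall j, #|[set i | M i j]| = 2 by move=> j; apply/eqP.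
have [inj tf] := stop_bad sd c2'.
have := @mantel _ [set [set i | M i j] | j in [set: 'I_n]] _ tf.
rewrite card_ord card_imset // cardsT card_ord; apply.
by move=> f /imsetP [j _ ->].
Qed.

Lemma dec_ex m n : n <= m * m %/ 4 -> exists M : 'M[bool]_(m, n), decodable 3 2 M.
Proof.
move=> hn.
pose s := enum (Bip m).
have hs : n <= size s by rewrite -cardE; exact: leq_trans hn (Bip_card m).
pose cc (j : 'I_n) := nth set0 s j.
have cB j : cc j \in Bip m.
  by rewrite -mem_enum; apply: mem_nth; exact: leq_trans (ltn_ord j) hs.
exists (\matrix_(i, j) (i \in cc j))%R.
have ce j : [set i | (\matrix_(i, j) (i \in cc j))%R i j] = cc j.
  by apply/setP => i; rewrite inE mxE.
apply/andP; split; last by apply/forallP => j; rewrite ce (Bip_2 (cB j)).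
apply: stop_good.
- by move=> j; rewrite ce; exact: Bip_2.
- move=> j1 j2; rewrite !ce => /eqP; rewrite /cc nth_uniq ?enum_uniq //.
  + by move/eqP/val_inj.
  + exact: leq_trans (ltn_ord j1) hs.
  + exact: leq_trans (ltn_ord j2) hs.
- have sub f : f \in [set [set i | (\matrix_(i, j) (i \in cc j))%R i j] | j in [set: 'I_n]] ->
      f \in Bip m by case/imsetP => j _ ->; rewrite ce.
  by move=> a b c h1 h2 h3; apply: (Bip_tfree (sub _ h1) (sub _ h2) (sub _ h3)).
Qed.

Theorem theorem6p3 (n : nat) : 1 <= n ->
  exists m : nat,
    is_mstar n 3 2 m /\
    is_least (fun m' => n <= 'C(m', 2) - K m' 2 3 1) m /\
    (m%:Z = Num.ceil (2 * Num.sqrt (n%:R : Rdefinitions.R)))%R.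
Proof.
move=> n1.
pose P m' := n <= m' * m' %/ 4.
have Pex : exists m', P m' by exists (n * 2); rewrite /P mulnACA mulnK // leq_pmulr.
case: (ex_minnP Pex) => m Pm minm.
exists m; split; [|split].
- split; first exact: dec_ex.
  by move=> m' [M /dec_le]; apply: minm.
- by split; [rewrite K_eq | move=> m'; rewrite K_eq; apply: minm].
case: m Pm minm => [|k] Pm minm; first by move: Pm; rewrite /P; lia.
have nk : ~~ P k by apply/negP => /minm; rewrite ltnn.
apply/esym/ceil_def.
have -> : ((k.+1)%:Z - 1 = k%:Z)%R by rewrite -addn1 PoszD addrK.
have s0 : (0 <= Num.sqrt (n%:R : Rdefinitions.R))%R := sqrtr_ge0 _.
rewrite -!pmulrn; apply/andP; split.
  rewrite -ltr_sqr ?nnegrE ?ler0n ?mulr_ge0 //.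
  rewrite exprMn sqr_sqrtr ?ler0n // -!natrX -natrM ltr_nat.
  by move: nk; rewrite /P -ltnNge ltn_divLR // !expnS expn0; lia.
rewrite -ler_sqr ?nnegrE ?ler0n ?mulr_ge0 //.
rewrite exprMn sqr_sqrtr ?ler0n // -!natrX -natrM ler_nat.
by move: Pm; rewrite /P leq_divRL // !expnS expn0; lia.
Qed.
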